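(* Let $E\subset\mathbb{R}^2$ be an arbitrary set. Call a function $v:E\to\mathbb{R}$ a semistatic strategy if there exist functions $h,g:\mathbb{R}\to\mathbb{R}$ such that $v(x,y)=h(x)(y-x)+g(y)$ for all $(x,y)\in E$. Then the set of semistatic strategies on $E$ is closed under pointwise convergence: if $v_n:E\to\mathbb{R}$, $n\in\mathbb{N}$, are semistatic strategies and $v_n(x,y)\to v(x,y)$ for every $(x,y)\in E$, then $v:E\to\mathbb{R}$ is a semistatic strategy.
   Context: Interpretation: $x$ is the price of a stock at date 1 and $y$ its price at date 2; $h$ is the stock position and $g$ the option position. *)

(* Defs.v *)
From Stdlib Require Import Reals.
Open Scope R_scope.

(* A function v : E -> R is represented by a total function R -> R -> R whose
   values outside E are irrelevant. v is a semistatic strategy on E if there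
   exist h g : R -> R with v x y = h x * (y - x) + g y for all (x,y) in E. *)
Definition semistatic (E : R -> R -> Prop) (v : R -> R -> R) : Prop :=
  exists h g : R -> R, forall x y : R, E x y -> v x y = h x * (y - x) + g y.

(* Main.v *)
Require Import Defs.
From Stdlib Require Import Reals Lra ClassicalEpsilon Classical Relations
  FunctionalExtensionality PropExtensionality.
Open Scope list_scope.
Open Scope R_scope.

Definition endp (r : R) (w : list (R*R)) : R :=
  match w with nil => r | (x,y)::_ => y end.

Fixpoint valid (E : R -> R -> Prop) (r : R) (w : list (R*R)) : Prop :=
  match w with
  | nil => True
  | (x,y)::w' => valid E r w' /\ E x (endp r w') /\ E x y /\ endp r w' <> x /\ y <> x
  end.

Fixpoint prop (u : R -> R -> R) (r : R) (w : list (R*R)) (c : R) : R :=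
  match w with
  | nil => c
  | (x,y)::w' => u x y - (y-x)/(endp r w' - x) * (u x (endp r w') - prop u r w' c)
  end.

Fixpoint Bw (r : R) (w : list (R*R)) : R :=
  match w with nil => 1 | (x,y)::w' => (y-x)/(endp r w' - x) * Bw r w' end.

Lemma prop_sol E u H G r w : (forall x y, E x y -> u x y = H x * (y-x) + G y) ->
  valid E r w -> prop u r w (G r) = G (endp r w).
Proof.
  intros Hs. induction w as [|[x y] w IH]; simpl; auto.
  intros [Hv [E1 [E2 [N1 N2]]]]. rewrite IH by auto.
  rewrite (Hs x y E2), (Hs x _ E1). field. intro; apply N1; lra.
Qed.

Lemma prop_aff u r w c : prop u r w c = prop u r w 0 + Bw r w * c.
Proof. induction w as [|[x y] w IH]; simpl; [ring| rewrite IH; ring]. Qed.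

Lemma Bw_nz E r w : valid E r w -> Bw r w <> 0.
Proof.
  induction w as [|[x y] w IH]; simpl; [lra|].
  intros [Hv [E1 [E2 [N1 N2]]]]. apply Rmult_integral_contrapositive_currified; auto.
  unfold Rdiv. apply Rmult_integral_contrapositive_currified.
  - intro; apply N2; lra.
  - apply Rinv_neq_0_compat. intro; apply N1; lra.
Qed.

Lemma cv_const k : Un_cv (fun _ => k) k.
Proof. intros e He. exists 0%nat. intros. unfold R_dist. rewrite Rminus_diag, Rabs_R0. lra. Qed.

Lemma cv_ext a b l : (forall n, a n = b n) -> Un_cv a l -> Un_cv b l.
Proof. intros Hab H e He. destruct (H e He) as [N HN]. exists N. intros n Hn. rewrite <- Hab. auto. Qed.

Lemma cv_zero a l : (forall n, a n = 0) -> Un_cv a l -> l = 0.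
Proof.
  intros Ha H. apply (UL_sequence a); auto.
  apply cv_ext with (fun _ => 0); [intro n; rewrite Ha; auto| apply cv_const].
Qed.

Lemma prop_cv E vn v r w : (forall x y, E x y -> Un_cv (fun n => vn n x y) (v x y)) ->
  valid E r w -> Un_cv (fun n => prop (vn n) r w 0) (prop v r w 0).
Proof.
  intros Hc. induction w as [|[x y] w IH]; simpl.
  - intros; apply cv_const.
  - intros [Hv [E1 [E2 [N1 N2]]]].
    apply CV_minus; [auto|]. apply CV_mult; [apply cv_const|]. apply CV_minus; auto.
Qed.

Definition good E u r c :=
  (forall w1 w2, valid E r w1 -> valid E r w2 -> endp r w1 = endp r w2 ->
     prop u r w1 c = prop u r w2 c) /\
  (forall w, valid E r w -> E (endp r w) (endp r w) -> prop u r w c = u (endp r w) (endp r w)).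

Lemma good_sol E u r : semistatic E u -> exists c, good E u r c.
Proof.
  intros [H [G Hs]]. exists (G r). split.
  - intros w1 w2 V1 V2 Heq. rewrite !(prop_sol E u H G) by auto. congruence.
  - intros w V Ep. rewrite (prop_sol E u H G) by auto. rewrite (Hs _ _ Ep). ring.
Qed.

Lemma conv_good E vn v r cn c :
  (forall x y, E x y -> Un_cv (fun n => vn n x y) (v x y)) ->
  Un_cv cn c -> (forall n, good E (vn n) r (cn n)) -> good E v r c.
Proof.
  intros Hc Hcn Hg. split.
  - intros w1 w2 V1 V2 Heq. rewrite (prop_aff v r w1 c), (prop_aff v r w2 c).
    apply Rminus_diag_uniq.
    apply (cv_zero (fun n => (prop (vn n) r w1 0 + Bw r w1 * cn n) - (prop (vn n) r w2 0 + Bw r w2 * cn n))).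
    + intro n. destruct (Hg n) as [G1 _]. pose proof (G1 w1 w2 V1 V2 Heq) as Q.
      rewrite (prop_aff (vn n) r w1), (prop_aff (vn n) r w2) in Q. lra.
    + apply CV_minus; apply CV_plus; (eapply prop_cv; eauto) || (apply CV_mult; [apply cv_const| auto]).
  - intros w V Ep. rewrite (prop_aff v r w c). apply Rminus_diag_uniq.
    apply (cv_zero (fun n => (prop (vn n) r w 0 + Bw r w * cn n) - vn n (endp r w) (endp r w))).
    + intro n. destruct (Hg n) as [_ G2]. pose proof (G2 w V Ep) as Q.
      rewrite (prop_aff (vn n) r w) in Q. lra.
    + apply CV_minus; [|auto]. apply CV_plus; [eapply prop_cv; eauto| apply CV_mult; [apply cv_const| auto]].
Qed.

Lemma exists_good E vn v r : (forall n, semistatic E (vn n)) ->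
  (forall x y, E x y -> Un_cv (fun n => vn n x y) (v x y)) -> exists c, good E v r c.
Proof.
  intros Hs Hc.
  assert (H : forall n, exists c, good E (vn n) r c) by (intro; apply good_sol; auto).
  pose (cn n := proj1_sig (constructive_indefinite_description _ (H n))).
  assert (Hcn : forall n, good E (vn n) r (cn n))
    by (intro n; exact (proj2_sig (constructive_indefinite_description _ (H n)))).
  destruct (classic (exists w1 w2, valid E r w1 /\ valid E r w2 /\ endp r w1 = endp r w2 /\ Bw r w1 <> Bw r w2))
    as [[w1 [w2 [V1 [V2 [Heq Hne]]]]] | Hno1].
  - exists ((prop v r w2 0 - prop v r w1 0) * / (Bw r w1 - Bw r w2)).
    apply (conv_good E vn v r cn); auto.
    apply cv_ext with (fun n => (prop (vn n) r w2 0 - prop (vn n) r w1 0) * / (Bw r w1 - Bw r w2)).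
    + intro n. destruct (Hcn n) as [G1 _]. pose proof (G1 w1 w2 V1 V2 Heq) as Q.
      rewrite (prop_aff (vn n) r w1), (prop_aff (vn n) r w2) in Q.
      assert (Bw r w1 - Bw r w2 <> 0) by (intro; apply Hne; lra).
      replace (prop (vn n) r w2 0 - prop (vn n) r w1 0) with ((Bw r w1 - Bw r w2) * cn n) by lra.
      field; auto.
    + apply CV_mult; [apply CV_minus; eapply prop_cv; eauto | apply cv_const].
  - destruct (classic (exists w, valid E r w /\ E (endp r w) (endp r w))) as [[w [V Ep]] | Hno2].
    + exists ((v (endp r w) (endp r w) - prop v r w 0) * / Bw r w).
      apply (conv_good E vn v r cn); auto.
      apply cv_ext with (fun n => (vn n (endp r w) (endp r w) - prop (vn n) r w 0) * / Bw r w).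
      * intro n. destruct (Hcn n) as [_ G2]. pose proof (G2 w V Ep) as Q.
        rewrite (prop_aff (vn n) r w) in Q.
        pose proof (Bw_nz E r w V).
        replace (vn n (endp r w) (endp r w) - prop (vn n) r w 0) with (Bw r w * cn n) by lra.
        field; auto.
      * apply CV_mult; [apply CV_minus; [auto | eapply prop_cv; eauto] | apply cv_const].
    + exists 0. split.
      * intros w1 w2 V1 V2 Heq.
        assert (HB : Bw r w1 = Bw r w2) by (apply NNPP; intro; apply Hno1; eauto 10).
        rewrite (prop_aff v r w1 0), (prop_aff v r w2 0). apply Rminus_diag_uniq.
        assert (L : prop v r w1 0 - prop v r w2 0 = 0).
        { apply (cv_zero (fun n => prop (vn n) r w1 0 - prop (vn n) r w2 0)).
          - intro n. destruct (Hcn n) as [G1 _]. pose proof (G1 w1 w2 V1 V2 Heq) as Q.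
            rewrite (prop_aff (vn n) r w1), (prop_aff (vn n) r w2), HB in Q. lra.
          - apply CV_minus; eapply prop_cv; eauto. }
        lra.
      * intros w V Ep. exfalso. apply Hno2. eauto.
Qed.

Lemma walk_exists E a b :
  clos_refl_trans R (fun y1 y2 => exists x, E x y1 /\ E x y2 /\ y1 <> x /\ y2 <> x) a b ->
  exists w, valid E a w /\ endp a w = b.
Proof.
  intros H. apply clos_rt_rtn1 in H. induction H as [|y z Hs H IH].
  - exists nil. simpl. auto.
  - destruct IH as [w [V Ew]]. destruct Hs as [x [E1 [E2 [N1 N2]]]].
    exists ((x,z)::w). simpl. rewrite Ew. tauto.
Qed.

Theorem theorem2p2 (E : R -> R -> Prop) (vn : nat -> R -> R -> R) (v : R -> R -> R) :
  (forall n : nat, semistatic E (vn n)) ->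
  (forall x y : R, E x y -> Un_cv (fun n => vn n x y) (v x y)) ->
  semistatic E v.
Proof.
  intros Hs Hc.
  pose (step := fun y1 y2 => exists x, E x y1 /\ E x y2 /\ y1 <> x /\ y2 <> x).
  pose (rt := fun y => epsilon (inhabits 0) (fun r => clos_refl_trans R step r y)).
  pose (cr := fun r => epsilon (inhabits 0) (fun c => good E v r c)).
  pose (wy := fun y => epsilon (inhabits nil) (fun w => valid E (rt y) w /\ endp (rt y) w = y)).
  pose (g := fun y => prop v (rt y) (wy y) (cr (rt y))).
  pose (h := fun x => let y' := epsilon (inhabits 0) (fun y => E x y /\ y <> x) in
                      (v x y' - g y') / (y' - x)).
  assert (Hrt : forall y, clos_refl_trans R step (rt y) y).
  { intro y. apply (epsilon_spec (inhabits 0) (fun r => clos_refl_trans R step r y)).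
    exists y. apply rt_refl. }
  assert (Hwy : forall y, valid E (rt y) (wy y) /\ endp (rt y) (wy y) = y).
  { intro y. apply (epsilon_spec (inhabits nil) (fun w => valid E (rt y) w /\ endp (rt y) w = y)).
    apply walk_exists. apply Hrt. }
  assert (Hcr : forall r, good E v r (cr r)).
  { intro r. apply (epsilon_spec (inhabits 0) (fun c => good E v r c)).
    eapply exists_good; eauto. }
  assert (Hsym : forall a b, clos_refl_trans R step a b -> clos_refl_trans R step b a).
  { intros a b H. induction H.
    - apply rt_step. destruct H as [x0 [A [B [C D]]]]. exists x0. tauto.
    - apply rt_refl.
    - eapply rt_trans; eauto. }
  exists h, g. intros x y Exy.
  destruct (Req_dec y x) as [Hyx | Hyx].
  - subst y. destruct (Hcr (rt x)) as [_ G2]. destruct (Hwy x) as [V Ew].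
    assert (Q := G2 (wy x) V). rewrite Ew in Q. unfold g. rewrite Q by auto. ring.
  - pose (y' := epsilon (inhabits 0) (fun y => E x y /\ y <> x)).
    assert (Hy' : E x y' /\ y' <> x).
    { apply (epsilon_spec (inhabits 0) (fun y => E x y /\ y <> x)). eauto. }
    destruct Hy' as [Ey' Ny'].
    assert (St : step y' y) by (exists x; tauto).
    assert (Req : rt y' = rt y).
    { unfold rt. f_equal. apply functional_extensionality. intro r.
      apply propositional_extensionality. split; intro Hr.
      - eapply rt_trans; [exact Hr| apply rt_step; exact St].
      - eapply rt_trans; [exact Hr| apply Hsym; apply rt_step; exact St]. }
    assert (Hh : h x = (v x y' - g y') / (y' - x)) by reflexivity.
    rewrite Hh.
    destruct (Hcr (rt y)) as [G1 _].
    destruct (Hwy y) as [Vy Ey]. destruct (Hwy y') as [Vy' Ey''].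
    rewrite Req in Vy', Ey''.
    assert (Q := G1 ((x,y) :: wy y') (wy y)).
    simpl in Q. rewrite Ey'' in Q.
    assert (Q' : v x y - (y - x) / (y' - x) * (v x y' - prop v (rt y) (wy y') (cr (rt y))) =
                 prop v (rt y) (wy y) (cr (rt y))) by (apply Q; auto; congruence).
    assert (Gy : g y = prop v (rt y) (wy y) (cr (rt y))) by reflexivity.
    assert (Gy' : g y' = prop v (rt y) (wy y') (cr (rt y))) by (unfold g; rewrite Req; reflexivity).
    rewrite <- Gy' in Q'. rewrite Gy, <- Q'. field. intro; apply Ny'; lra.
Qed.
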